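(* Let $n \geq 2$ and let $x_1, \dots, x_n$ be real numbers with mean $\mu = \frac{1}{n}\sum_{i=1}^n x_i > 0$ and variance $\sigma^2 = \frac{1}{n}\sum_{i=1}^n (x_i-\mu)^2$, where $\sigma \ge 0$. (a) If $0 \leq \sigma/\mu < 1/\sqrt{n-1}$, then each $x_i$ is positive and $$\left(\mu - \sigma\sqrt{n-1}\right)\left(\mu + \frac{\sigma}{\sqrt{n-1}}\right)^{n-1} \;\leq\; x_1 x_2 \cdots x_n \;\leq\; \left(\mu + \sigma\sqrt{n-1}\right)\left(\mu - \frac{\sigma}{\sqrt{n-1}}\right)^{n-1}.$$ Both bounds are sharp: for every $\mu>0$ and $\sigma$ with $0 \le \sigma/\mu < 1/\sqrt{n-1}$, each bound is attained by some sequence of $n$ real numbers with mean $\mu$ and variance $\sigma^2$. (b) If every $x_i$ is positive, then $0 \leq \sigma/\mu < \sqrt{n-1}$ and the two inequalities displayed in (a) still hold. The upper bound is sharp: for every $\mu>0$ and $\sigma$ with $0\le \sigma/\mu<\sqrt{n-1}$ it is attained by some positive sequence with mean $\mu$ and variance $\sigma^2$. For $1/\sqrt{n-1} < \sigma/\mu < \sqrt{n-1}$ the lower bound expression $(\mu - \sigma\sqrt{n-1})(\mu + \sigma/\sqrt{n-1})^{n-1}$ is negative; replacing the lower bound by $\max\left\{0, (\mu - \sigma\sqrt{n-1})(\mu + \sigma/\sqrt{n-1})^{n-1}\right\}$, the lower inequality is best possible on the entire range $0 \le \sigma/\mu < \sqrt{n-1}$, i.e. this quantity equals the infimum of $x_1\cdots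 x_n$ over all positive sequences of length $n$ with mean $\mu$ and variance $\sigma^2$.
   Context: Mean and variance are the population mean and variance: $\mu = \frac1n\sum x_i$, $\sigma^2 = \frac1n \sum (x_i-\mu)^2$, with $\sigma$ the nonnegative square root. *)

(* Defs.v *)
From HB Require Import structures.
From mathcomp Require Import all_boot all_order all_algebra.
From mathcomp Require Import reals.
Set Implicit Arguments. Unset Strict Implicit. Unset Printing Implicit Defensive.
Import Order.TTheory GRing.Theory Num.Theory.
Local Open Scope ring_scope.

Section Defs.
Variables (R : realType) (n : nat).

Definition mean (x : 'I_n -> R) : R := (\sum_(i < n) x i) / n%:R.

Definition variance (x : 'I_n -> R) : R :=
  (\sum_(i < n) (x i - mean x) ^+ 2) / n%:R.

Definition stddev (x : 'I_n -> R) : R := Num.sqrt (variance x).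

Definition prodx (x : 'I_n -> R) : R := \prod_(i < n) x i.

Definition lower_bd (mu s : R) : R :=
  (mu - s * Num.sqrt (n.-1)%:R) * (mu + s / Num.sqrt (n.-1)%:R) ^+ n.-1.

Definition upper_bd (mu s : R) : R :=
  (mu + s * Num.sqrt (n.-1)%:R) * (mu - s / Num.sqrt (n.-1)%:R) ^+ n.-1.

End Defs.

(* Main.v *)
Require Import Defs.
From HB Require Import structures.
From mathcomp Require Import all_boot all_order all_algebra.
From mathcomp Require Import reals.
From mathcomp Require Import boolp classical_sets interval_inference topology normedtype derive exp.
From mathcomp Require Import lra ring.
Import Order.TTheory GRing.Theory Num.Theory.
Import numFieldNormedType.Exports.
Local Open Scope ring_scope.

Section A.
Variable R : realType.

Definition F (al b0 b1 b2 : R) (x : R) : R := al * ln x + b0 + b1 * x + b2 * (x * x).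

Lemma F_derive (al b0 b1 b2 x : R) : 0 < x ->
  is_derive x 1 (F al b0 b1 b2) (al / x + b1 + 2 * b2 * x).
Proof.
move=> x0; rewrite /F.
have hl := is_derive1_ln x0.
apply: is_derive_eq.
rewrite !scaler1 addr0 ; rewrite -[_ *: _]/(_ * _) -[b2 *: _]/(b2 * _). lra.
Qed.

End A.
Arguments F {R}.
Section B.
Variable R : realType.
Lemma F_mono (al b0 b1 b2 a b : R) : 0 < a -> a <= b ->
  (forall t, a <= t -> t <= b -> 0 <= al / t + b1 + 2 * b2 * t) ->
  F al b0 b1 b2 a <= F al b0 b1 b2 b.
Proof.
move=> a0 ab hd.
have [c /andP[ac cb] E] : exists2 c, c \in `[a, b]%R &
   F al b0 b1 b2 b - F al b0 b1 b2 a = (al / c + b1 + 2 * b2 * c) * (b - a).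
  apply: (MVT_segment (df := fun c => al / c + b1 + 2 * b2 * c)) => //.
  - move=> y; rewrite in_itv /= => /andP[ay _]; apply: F_derive; exact: lt_trans ay.
  - apply: derivable_within_continuous => y; rewrite in_itv /= => /andP[ay _].
    apply: ex_derive; apply: F_derive; exact: lt_le_trans ay.
rewrite -subr_ge0 E; apply: mulr_ge0; last by rewrite subr_ge0.
by apply: hd.
Qed.
End B.
Section C.
Variable R : realType.
Lemma F_anti (al b0 b1 b2 a b : R) : 0 < a -> a <= b ->
  (forall t, a <= t -> t <= b -> al / t + b1 + 2 * b2 * t <= 0) ->
  F al b0 b1 b2 b <= F al b0 b1 b2 a.
Proof.
move=> a0 ab hd.
have := @F_mono R (- al) (- b0) (- b1) (- b2) a b a0 ab.
have E y : F (- al) (- b0) (- b1) (- b2) y = - F al b0 b1 b2 y.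
  by rewrite /F; ring.
rewrite !E lerN2; apply => t ha hb.
have := hd t ha hb; rewrite mulrN mulNr -!opprD; lra.
Qed.

Lemma K_ge0 (p x : R) : 0 < p -> p <= x ->
  0 <= ln x - ln p - (x - p) / p + (x - p) ^+ 2 / (2 * p ^+ 2).
Proof.
move=> p0 px.
have E y : F 1 (- ln p + 3 / 2) (- 2 / p) (1 / (2 * p ^+ 2)) y =
   ln y - ln p - (y - p) / p + (y - p) ^+ 2 / (2 * p ^+ 2).
  rewrite /F; field; by rewrite gt_eqF.
rewrite -E.
have -> : 0 = F 1 (- ln p + 3 / 2) (- 2 / p) (1 / (2 * p ^+ 2)) p.
  rewrite E; field; by rewrite gt_eqF.
apply: F_mono => // t pt tx.
have t0 : 0 < t by exact: lt_le_trans pt.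
have -> : 1 / t + - 2 / p + 2 * (1 / (2 * p ^+ 2)) * t = (t - p) ^+ 2 / (t * p ^+ 2).
  field; by rewrite !gt_eqF.
by apply: divr_ge0; [exact: sqr_ge0 | apply: mulr_ge0; [exact: ltW|exact: sqr_ge0]].
Qed.

Lemma K_le0 (p x : R) : 0 < x -> x <= p ->
  ln x - ln p - (x - p) / p + (x - p) ^+ 2 / (2 * p ^+ 2) <= 0.
Proof.
move=> x0 xp.
have p0 : 0 < p by exact: lt_le_trans xp.
have E y : F 1 (- ln p + 3 / 2) (- 2 / p) (1 / (2 * p ^+ 2)) y =
   ln y - ln p - (y - p) / p + (y - p) ^+ 2 / (2 * p ^+ 2).
  rewrite /F; field; by rewrite gt_eqF.
rewrite -E.
have -> : 0 = F 1 (- ln p + 3 / 2) (- 2 / p) (1 / (2 * p ^+ 2)) p.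
  rewrite E; field; by rewrite gt_eqF.
apply: F_mono => // t pt tx.
have t0 : 0 < t by exact: lt_le_trans pt.
have -> : 1 / t + - 2 / p + 2 * (1 / (2 * p ^+ 2)) * t = (t - p) ^+ 2 / (t * p ^+ 2).
  field; by rewrite !gt_eqF.
by apply: divr_ge0; [exact: sqr_ge0 | apply: mulr_ge0; [exact: ltW|exact: sqr_ge0]].
Qed.
End C.
Arguments K_ge0 {R}. Arguments K_le0 {R}. Arguments F_anti {R}. Arguments F_mono {R}.
Section D.
Variable R : realType.

Lemma inv_anti {p t x : R} : 0 < p -> 0 < t -> t <= x -> 1 / (p * x) <= 1 / (p * t).
Proof.
move=> p0 t0 tx.
have x0 : 0 < x by exact: lt_le_trans tx.
rewrite -subr_ge0.
have -> : 1 / (p * t) - 1 / (p * x) = (x - t) / (p * t * x).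
  field; rewrite !gt_eqF //.
by apply: divr_ge0; [rewrite subr_ge0 | rewrite !mulr_ge0 // ltW].
Qed.

Lemma UB (p q x : R) : 0 < p -> p < q -> 0 < x -> x <= q ->
  ln x <= ln p + (x - p) / p +
     (ln q - ln p - (q - p) / p) / (q - p) ^+ 2 * (x - p) ^+ 2.
Proof.
move=> p0 pq x0 xq.
set g := (ln q - ln p - (q - p) / p) / (q - p) ^+ 2.
have hp : p != 0 by rewrite gt_eqF.
have hqp : q - p != 0 by rewrite gt_eqF // subr_gt0.
have qp0 : 0 < (q - p) ^+ 2 by rewrite exprn_gt0 // subr_gt0.
have gK : - (1 / (p * p)) <= 2 * g.
  have := K_ge0 p q p0 (ltW pq).
  move=> h; rewrite /g -subr_ge0.
  have -> : 2 * ((ln q - ln p - (q - p) / p) / (q - p) ^+ 2) - - (1 / (p * p)) =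
     2 * (ln q - ln p - (q - p) / p + (q - p) ^+ 2 / (2 * p ^+ 2)) / (q - p) ^+ 2.
    by field; rewrite hqp hp.
  by apply: divr_ge0; [rewrite mulr_ge0 // ler0n | exact: ltW].
pose G := F (-1) (ln p - 1 + g * p ^+ 2) (1 / p - 2 * g * p) g.
have E y : G y = ln p + (y - p) / p + g * (y - p) ^+ 2 - ln y.
  rewrite /G /F; field; by rewrite gt_eqF.
have D t : 0 < t -> -1 / t + (1 / p - 2 * g * p) + 2 * g * t = (t - p) * (1 / (p * t) + 2 * g).
  move=> t0; field; by rewrite !gt_eqF.
suff : 0 <= G x by rewrite E subr_ge0 mulrC.
have Gp : G p = 0 by rewrite E; field; rewrite gt_eqF.
have Gq : G q = 0 by rewrite E /g; field; rewrite hqp hp.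
have [xp|px] := lerP x p.
  rewrite -Gp; apply: F_anti => // t xt tp.
  have t0 : 0 < t by exact: lt_le_trans xt.
  rewrite D // mulr_le0_ge0 ?subr_le0 //.
  have := inv_anti p0 t0 tp.
  move: gK; lra.
have [h|h] := lerP 0 (1 / (p * x) + 2 * g).
  rewrite -Gp; apply: F_mono => //; first exact: ltW.
  move=> t pt tx; have t0 : 0 < t by exact: lt_le_trans pt.
  rewrite D // mulr_ge0 ?subr_ge0 //.
  have := inv_anti p0 t0 tx; move: h; lra.
rewrite -Gq; apply: F_anti => // t xt tq.
have t0 : 0 < t by exact: lt_le_trans xt.
rewrite D // mulr_ge0_le0 ?subr_ge0 //.
  by apply: le_trans (ltW px) xt.
have := inv_anti p0 x0 xt; move: h; lra.
Qed.
End D.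
Arguments inv_anti {R p t x}.
Section E.
Variable R : realType.
Lemma LB (p q x : R) : 0 < p -> p < q -> p <= x ->
  ln q + (x - q) / q +
     (ln p - ln q - (p - q) / q) / (p - q) ^+ 2 * (x - q) ^+ 2 <= ln x.
Proof.
move=> p0 pq px.
have q0 : 0 < q by exact: lt_trans pq.
have x0 : 0 < x by exact: lt_le_trans px.
set g := (ln p - ln q - (p - q) / q) / (p - q) ^+ 2.
have hq : q != 0 by rewrite gt_eqF.
have hqp : p - q != 0 by rewrite lt_eqF // subr_lt0.
have qp0 : 0 < (p - q) ^+ 2 by rewrite lt_def sqrf_eq0 hqp sqr_ge0.
have gK : 2 * g <= - (1 / (q * q)).
  have := K_le0 q p p0 (ltW pq).
  move=> h; rewrite /g -subr_ge0.
  have -> : - (1 / (q * q)) - 2 * ((ln p - ln q - (p - q) / q) / (p - q) ^+ 2) =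
     - (2 * (ln p - ln q - (p - q) / q + (p - q) ^+ 2 / (2 * q ^+ 2)) / (p - q) ^+ 2).
    by field; rewrite hqp hq.
  rewrite oppr_ge0; apply: mulr_le0_ge0; last by rewrite invr_ge0 ltW.
  by rewrite pmulr_rle0.
pose G := F 1 (- ln q + 1 - g * q ^+ 2) (- (1 / q) + 2 * g * q) (- g).
have E y : G y = ln y - (ln q + (y - q) / q + g * (y - q) ^+ 2).
  rewrite /G /F; field; by rewrite hq.
have D t : 0 < t -> 1 / t + (- (1 / q) + 2 * g * q) + 2 * - g * t = (t - q) * (- (1 / (q * t)) - 2 * g).
  move=> t0; field; by rewrite !gt_eqF.
suff : 0 <= G x by rewrite E subr_ge0 mulrC.
have Gp : G p = 0 by rewrite E /g; field; rewrite hqp hq.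
have Gq : G q = 0 by rewrite E; field; rewrite hq.
have [qx|xq] := lerP q x.
  rewrite -Gq; apply: F_mono => // t qt tx.
  have t0 : 0 < t by exact: lt_le_trans qt.
  rewrite D // mulr_ge0 ?subr_ge0 //.
  have := inv_anti q0 q0 qt; move: gK; lra.
have [h|h] := lerP (- (1 / (q * x)) - 2 * g) 0.
  rewrite -Gp; apply: F_mono => // t pt tx.
  have t0 : 0 < t by exact: lt_le_trans pt.
  rewrite D // mulr_le0 ?subr_le0 //.
    by apply: le_trans (ltW xq).
  have := inv_anti q0 t0 tx; move: h; lra.
rewrite -Gq; apply: F_anti => //; first exact: ltW.
move=> t xt tq; have t0 : 0 < t by exact: lt_le_trans xt.
rewrite D // mulr_le0_ge0 ?subr_le0 //.
have := inv_anti q0 x0 xt; move: h; lra.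
Qed.
End E.
Arguments UB {R}. Arguments LB {R}.

Section Disc.
Context {R : realType} {k : nat}.
Local Notation N := k.+2.
Implicit Types x y : 'I_N -> R.

Lemma NR0 : (N%:R : R) != 0. Proof. by rewrite pnatr_eq0. Qed.
Lemma NR0' : (2 + k%:R : R) != 0.
Proof. rewrite gt_eqF //; have := ler0n R k; lra. Qed.
Lemma NRgt0 : 0 < (N%:R : R). Proof. by rewrite ltr0n. Qed.

Lemma sum_mean x : \sum_i x i = N%:R * mean x.
Proof. rewrite /mean; field; exact: NR0'. Qed.

Lemma var_ge0 x : 0 <= variance x.
Proof.
rewrite /variance; apply: divr_ge0; last exact: ler0n.
by apply: sumr_ge0 => i _; exact: sqr_ge0.
Qed.

Lemma stddev_sqr x : stddev x ^+ 2 = variance x.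
Proof. by rewrite /stddev sqr_sqrtr // var_ge0. Qed.

Lemma stddev_ge0 x : 0 <= stddev x.
Proof. exact: sqrtr_ge0. Qed.

Lemma sum_dev x : \sum_i (x i - mean x) = 0.
Proof.
rewrite sumrB sum_mean sumr_const card_ord -mulr_natl; ring.
Qed.

Lemma sum_dev2 x : \sum_i (x i - mean x) ^+ 2 = N%:R * variance x.
Proof. rewrite /variance; field; exact: NR0'. Qed.

Lemma sum_lin (e f c : R) x :
  \sum_i (e + f * x i + c * x i ^+ 2) = N%:R * e + f * \sum_i x i + c * \sum_i x i ^+ 2.
Proof.
rewrite big_split big_split /= sumr_const card_ord -!mulr_sumr.
by rewrite mulr_natl.
Qed.

Lemma sum_quad (a b c d : R) x :
  \sum_i (a + b * (x i - d) + c * (x i - d) ^+ 2) =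
  N%:R * a + b * (\sum_i x i - N%:R * d)
  + c * (\sum_i x i ^+ 2 - 2 * d * \sum_i x i + N%:R * d ^+ 2).
Proof.
rewrite (eq_bigr (fun i => (a - b * d + c * d ^+ 2) + (b - 2 * c * d) * x i + c * x i ^+ 2));
  last by move=> i _; ring.
rewrite sum_lin; ring.
Qed.

Lemma sum_sq x : \sum_i x i ^+ 2 = N%:R * (variance x + mean x ^+ 2).
Proof.
have := sum_quad 0 0 1 (mean x) x.
rewrite (eq_bigr (fun i => (x i - mean x) ^+ 2)); last by move=> i _; ring.
rewrite sum_dev2 sum_mean => h.
have : N%:R * variance x = \sum_i x i ^+ 2 - N%:R * mean x ^+ 2 by rewrite h; ring.
move=> h2; rewrite mulrDr h2; ring.
Qed.

Lemma same_quad (a b c d : R) x y :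
  mean x = mean y -> variance x = variance y ->
  \sum_i (a + b * (x i - d) + c * (x i - d) ^+ 2) =
  \sum_i (a + b * (y i - d) + c * (y i - d) ^+ 2).
Proof.
move=> hm hv; rewrite !sum_quad !sum_sq !sum_mean hm hv //.
Qed.

Lemma moments x (mu s : R) : 0 <= s ->
  \sum_i x i = N%:R * mu -> \sum_i (x i - mu) ^+ 2 = N%:R * s ^+ 2 ->
  mean x = mu /\ stddev x = s.
Proof.
move=> s0 h1 h2.
have hm : mean x = mu.
  by apply: (mulfI NR0); rewrite -sum_mean.
split => //; rewrite /stddev /variance hm h2 mulrC mulKf ?NR0 //.
by rewrite sqrtr_sqr ger0_norm.
Qed.

Lemma M0' : (1 + k%:R : R) != 0.
Proof. rewrite gt_eqF //; have := ler0n R k; lra. Qed.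
Lemma Mgt0 : 0 < ((k.+1)%:R : R). Proof. by rewrite ltr0n. Qed.

Lemma dev_bound x i : (x i - mean x) ^+ 2 <= (k.+1)%:R * variance x.
Proof.
set d := x i - mean x; set m : R := (k.+1)%:R.
set c := d / m.
have h1 : (d + c) ^+ 2 <= \sum_j (x j - (mean x - c)) ^+ 2.
  rewrite (bigD1 i) //= -/d.
  have -> : x i - (mean x - c) = d + c by rewrite /d; ring.
  by rewrite lerDl; apply: sumr_ge0 => j _; exact: sqr_ge0.
have h2 : \sum_j (x j - (mean x - c)) ^+ 2 = N%:R * variance x + N%:R * c ^+ 2.
  have := sum_quad 0 0 1 (mean x - c) x.
  rewrite (eq_bigr (fun j => (x j - (mean x - c)) ^+ 2)); last by move=> j _; ring.
  by move=> ->; rewrite sum_sq sum_mean; ring.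
rewrite h2 in h1.
have key : N%:R * variance x + N%:R * c ^+ 2 - (d + c) ^+ 2 =
   (N%:R / m) * (m * variance x - d ^+ 2).
  by rewrite /c /m; field; exact: M0'.
have : 0 <= (N%:R / m) * (m * variance x - d ^+ 2) by rewrite -key subr_ge0.
rewrite pmulr_rge0 ?subr_ge0 //.
by apply: divr_gt0; [exact: NRgt0 | exact: Mgt0].
Qed.

Definition two (a b : R) : 'I_N -> R := fun i => if (val i == 0)%N then a else b.

Lemma sum_two (F : R -> R) a b : \sum_i F (two a b i) = F a + (k.+1)%:R * F b.
Proof.
rewrite big_ord_recl /two /=.
rewrite (eq_bigr (fun _ => F b)); last first.
  by [].
by rewrite big_const_ord iter_addr_0 mulr_natl.

Qed.

Lemma prod_two a b : prodx (two a b) = a * b ^+ k.+1.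
Proof.
rewrite /prodx big_ord_recl /two eqxx.
rewrite (eq_bigr (fun _ => b)); last first.
  by [].
by rewrite big_const_ord iter_mulr_1.
Qed.

Lemma ln_prod x : (forall i, 0 < x i) -> ln (prodx x) = \sum_i ln (x i).
Proof.
move=> hx; rewrite /prodx.
suff : 0 < \prod_i x i /\ ln (\prod_i x i) = \sum_i ln (x i) by case.
elim/big_rec2: _ => [|i a b _ [b0 IH]]; first by rewrite ln1.
split; first by rewrite mulr_gt0.
by rewrite lnM ?posrE // IH.
Qed.

Lemma sumsq_lt x : (forall i, 0 < x i) -> \sum_i x i ^+ 2 < (\sum_i x i) ^+ 2.
Proof.
move=> hx.
have gen (n : nat) (y : 'I_n -> R) : (forall i, 0 < y i) ->
    0 <= \sum_i y i /\ \sum_i y i ^+ 2 <= (\sum_i y i) ^+ 2.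
  move=> hy; elim/big_rec2: _ => [|i a b _ [b0 IH]]; first by rewrite expr0n /= lexx.
  have := hy i => yi; split; first by rewrite addr_ge0 // ltW.
  have : 0 <= y i * b by rewrite mulr_ge0 // ltW.
  move: IH; rewrite !expr2; nra.
rewrite big_ord_recl [X in _ < X ^+ 2]big_ord_recl.
have [h0 h1] := gen _ (fun j : 'I_k.+1 => x (lift ord0 j)) (fun j => hx _).
have pos : 0 < \sum_(j < k.+1) x (lift ord0 j).
  rewrite big_ord_recl; apply: ltr_pwDl; first exact: hx.
  by apply: sumr_ge0 => j _; exact: ltW.
have := hx ord0 => x0.
have : 0 < x ord0 * \sum_(j < k.+1) x (lift ord0 j) by exact: mulr_gt0.
move: h1; rewrite !expr2; nra.
Qed.

End Disc.

Section Main.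
Context {R : realType} {k : nat}.
Local Notation N := k.+2.
Implicit Types x y : 'I_N -> R.

Definition rr : R := Num.sqrt ((k.+1)%:R).
Lemma rr_sqr : rr ^+ 2 = (k.+1)%:R.
Proof. by rewrite /rr sqr_sqrtr // ler0n. Qed.
Lemma rr_gt0 : 0 < rr.
Proof. by rewrite /rr sqrtr_gt0 ltr0n. Qed.
Lemma rr_ge1 : 1 <= rr.
Proof.
have h := rr_sqr; have h0 := rr_gt0.
have : 1 <= ((k.+1)%:R : R) by rewrite ler1n.
rewrite -h; nra.
Qed.
Lemma rrN : ((k.+2)%:R : R) = rr ^+ 2 + 1.
Proof. rewrite rr_sqr; ring. Qed.

Lemma moments2 x (mu s : R) : 0 <= s ->
  \sum_i x i = N%:R * mu -> \sum_i x i ^+ 2 = N%:R * (s ^+ 2 + mu ^+ 2) ->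
  mean x = mu /\ stddev x = s.
Proof.
move=> s0 h1 h2; apply: moments => //.
have := sum_quad 0 0 1 mu x.
rewrite (eq_bigr (fun i => (x i - mu) ^+ 2)); last by move=> i _; ring.
by move=> ->; rewrite h1 h2; ring.
Qed.

Lemma two_stats (mu s : R) a b : 0 <= s ->
  a + (k.+1)%:R * b = N%:R * mu ->
  a ^+ 2 + (k.+1)%:R * b ^+ 2 = N%:R * (s ^+ 2 + mu ^+ 2) ->
  mean (two (k:=k) a b) = mu /\ stddev (two (k:=k) a b) = s.
Proof.
move=> s0 h1 h2; apply: moments2 => //.
  by rewrite (sum_two id).
by rewrite (sum_two (fun z => z ^+ 2)).
Qed.

Lemma dev_abs x i : mean x - stddev x * rr <= x i /\ x i <= mean x + stddev x * rr.
Proof.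
have h := dev_bound x i.
rewrite -stddev_sqr -rr_sqr in h.
have s0 := stddev_ge0 x; have r0 := rr_gt0.
have sr0 : 0 <= stddev x * rr by rewrite mulr_ge0 // ltW.
have h' : (x i - mean x) ^+ 2 <= (stddev x * rr) ^+ 2 by rewrite exprMn mulrC.
move: h' sr0; rewrite !expr2 => h' sr0; split; nra.
Qed.

Lemma const_case x : stddev x = 0 -> forall i, x i = mean x.
Proof.
move=> s0 i; have [h1 h2] := dev_abs x i; move: h1 h2; rewrite s0 mul0r subr0 addr0.
move=> h1 h2; apply/eqP; rewrite eq_le h1 h2 //.
Qed.

Lemma prod_const x : stddev x = 0 -> prodx x = mean x ^+ N.
Proof.
move=> s0; rewrite /prodx (eq_bigr (fun _ => mean x)); last by move=> i _; exact: const_case.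
by rewrite big_const_ord iter_mulr_1.
Qed.

Lemma two_pos {a b : R} : 0 < a -> 0 < b -> forall i, 0 < two (k:=k) a b i.
Proof. by move=> a0 b0 i; rewrite /two; case: ifP. Qed.

Lemma prodx_gt0 x : (forall i, 0 < x i) -> 0 < prodx x.
Proof. by move=> h; rewrite /prodx prodr_gt0. Qed.

Lemma upper_main x : (forall i, 0 < x i) -> 0 < mean x - stddev x / rr ->
  prodx x <= upper_bd N (mean x) (stddev x).
Proof.
move=> xpos p0.
have r0 := rr_gt0; have rn0 : rr != 0 by rewrite gt_eqF.
set mu := mean x; set s := stddev x.
have -> : upper_bd N mu s = prodx (two (k:=k) (mu + s * rr) (mu - s / rr)) by rewrite prod_two.
have [s0|sn0] := eqVneq s 0.
  rewrite (prod_const x) // prod_two s0 mul0r mul0r addr0 subr0 -exprS //.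
have spos : 0 < s by rewrite lt_def sn0 stddev_ge0.
set p := mu - s / rr; set q := mu + s * rr.
have pq : p < q.
  rewrite /p /q; have : 0 < s / rr by rewrite divr_gt0.
  have : 0 < s * rr by rewrite mulr_gt0.
  lra.
have q0 : 0 < q by exact: lt_trans pq.
have [my sy] : mean (two (k:=k) q p) = mu /\ stddev (two (k:=k) q p) = s.
  apply: two_stats; first exact: ltW.
    by rewrite /p /q rrN -rr_sqr; field.
  by rewrite /p /q rrN -rr_sqr; field.
have ypos := two_pos q0 p0.
rewrite -ler_ln ?posrE ?prodx_gt0 // !ln_prod //.
set g := (ln q - ln p - (q - p) / p) / (q - p) ^+ 2.
apply: (@le_trans _ _ (\sum_i (ln p + 1 / p * (x i - p) + g * (x i - p) ^+ 2))).
  apply: ler_sum => i _.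
  have [_ hi] := dev_abs x i.
  apply: le_trans (UB p q (x i) p0 pq (xpos i) hi) _.
  by rewrite /g mulrC div1r.
rewrite (same_quad _ _ _ _ x (two (k:=k) q p)); last first.
  by rewrite -!stddev_sqr sy.
  by rewrite my.
rewrite (sum_two (fun z => ln p + 1 / p * (z - p) + g * (z - p) ^+ 2)) (sum_two (@ln R)).
have hp : p != 0 by rewrite gt_eqF.
have hqp : q - p != 0 by rewrite gt_eqF // subr_gt0.
rewrite le_eqVlt; apply/orP; left; apply/eqP.
rewrite /g; field; by rewrite hp hqp.
Qed.
Lemma lower_pos x : 0 < mean x - stddev x * rr -> forall i, 0 < x i.
Proof. by move=> h i; have [h1 _] := dev_abs x i; exact: lt_le_trans h1. Qed.

Lemma lower_main x : 0 < mean x - stddev x * rr ->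
  lower_bd N (mean x) (stddev x) <= prodx x.
Proof.
move=> p0; have xpos := lower_pos x p0.
have r0 := rr_gt0; have rn0 : rr != 0 by rewrite gt_eqF.
set mu := mean x; set s := stddev x.
have -> : lower_bd N mu s = prodx (two (k:=k) (mu - s * rr) (mu + s / rr)) by rewrite prod_two.
have [s0|sn0] := eqVneq s 0.
  rewrite (prod_const x) // prod_two s0 mul0r mul0r addr0 subr0 -exprS //.
have spos : 0 < s by rewrite lt_def sn0 stddev_ge0.
set p := mu - s * rr; set q := mu + s / rr.
have pq : p < q.
  rewrite /p /q; have : 0 < s / rr by rewrite divr_gt0.
  have : 0 < s * rr by rewrite mulr_gt0.
  lra.
have q0 : 0 < q by exact: lt_trans pq.
have [my sy] : mean (two (k:=k) p q) = mu /\ stddev (two (k:=k) p q) = s.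
  apply: two_stats; first exact: ltW.
    by rewrite /p /q rrN -rr_sqr; field.
  by rewrite /p /q rrN -rr_sqr; field.
have ypos := two_pos p0 q0.
rewrite -ler_ln ?posrE ?prodx_gt0 // !ln_prod //.
set g := (ln p - ln q - (p - q) / q) / (p - q) ^+ 2.
apply: (@le_trans _ _ (\sum_i (ln q + 1 / q * (x i - q) + g * (x i - q) ^+ 2))); last first.
  apply: ler_sum => i _.
  have [hi _] := dev_abs x i.
  apply: le_trans (LB p q (x i) p0 pq hi).
  by rewrite /g mulrC div1r.
rewrite (same_quad _ _ _ _ x (two (k:=k) p q)); last first.
  by rewrite -!stddev_sqr sy.
  by rewrite my.
rewrite (sum_two (fun z => ln q + 1 / q * (z - q) + g * (z - q) ^+ 2)) (sum_two (@ln R)).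
have hq : q != 0 by rewrite gt_eqF.
have hqp : p - q != 0 by rewrite lt_eqF // subr_lt0.
rewrite le_eqVlt; apply/orP; left; apply/eqP.
rewrite /g; field; by rewrite hq hqp.
Qed.
Definition three (de u w : R) : 'I_N -> R :=
  fun i => if (val i == 0)%N then de else if (val i == 1)%N then u else w.

Lemma sum_three (F : R -> R) de u w :
  \sum_i F (three de u w i) = F de + F u + k%:R * F w.
Proof.
rewrite big_ord_recl big_ord_recl /three /=.
rewrite (eq_bigr (fun _ => F w)); last by [].
by rewrite big_const_ord iter_addr_0 mulr_natl addrA.
Qed.

Lemma prod_three de u w : prodx (three de u w) = de * u * w ^+ k.
Proof.
rewrite /prodx big_ord_recl big_ord_recl /three /=.
rewrite (eq_bigr (fun _ => w)); last by [].
by rewrite big_const_ord iter_mulr_1 mulrA.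
Qed.
Lemma inf_witness (mu s eps : R) : (0 < k)%N -> 0 < mu -> 0 <= s ->
  mu <= s * rr -> s < rr * mu -> 0 < eps ->
  exists x : 'I_N -> R, (forall i, 0 < x i) /\ mean x = mu /\ stddev x = s /\ prodx x < eps.
Proof.
move=> k0 mu0 s0 musr srmu eps0.
have r0 := rr_gt0; have hr := rr_sqr.
have c0 : 0 < (k%:R : R) by rewrite ltr0n.
have c1 : 1 <= (k%:R : R) by rewrite ler1n.
have C0 : 0 < ((k.+1)%:R : R) by rewrite ltr0n.
have hC : ((k.+1)%:R : R) = k%:R + 1 by ring.
have hN : ((k.+2)%:R : R) = k%:R + 2 by ring.
pose B := (k.+2)%:R * mu.
pose A := (k.+2)%:R * (s ^+ 2 + mu ^+ 2).
have B0 : 0 < B by rewrite mulr_gt0 // ltr0n.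
have BA : 0 < B ^+ 2 - A.
  have -> : B ^+ 2 - A = (k.+2)%:R * ((k.+1)%:R * mu ^+ 2 - s ^+ 2) by rewrite /B /A; ring.
  apply: mulr_gt0; first by rewrite ltr0n.
  rewrite subr_gt0 -hr.
  have : 0 <= rr * mu by rewrite mulr_ge0 // ltW.
  move: srmu s0; rewrite !expr2 => h1 h2 h3; nra.
pose de := Num.min (Num.min mu ((B ^+ 2 - A) / (4 * B))) (eps / (2 * B ^+ k.+1)).
have de0 : 0 < de.
  rewrite /de !lt_min mu0 /=; apply/andP; split.
    by apply: divr_gt0 => //; rewrite mulr_gt0.
  by apply: divr_gt0 => //; rewrite mulr_gt0 // exprn_gt0.
have de1 : de <= mu by rewrite /de !ge_min lexx.
have de2 : de <= (B ^+ 2 - A) / (4 * B) by rewrite /de !ge_min lexx orbT.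
have de3 : de <= eps / (2 * B ^+ k.+1) by rewrite /de !ge_min lexx orbT.
have de2' : 4 * B * de <= B ^+ 2 - A.
  by rewrite mulrC -ler_pdivlMr ?mulr_gt0.
pose S := B - de; pose T := A - de ^+ 2.
have S0 : 0 < S.
  rewrite /S /B hN; move: de1 mu0 c0; nra.
pose a := S / (k.+1)%:R.
have a0 : 0 < a by rewrite divr_gt0.
pose D2 := (T - (k.+1)%:R * a ^+ 2) / (k%:R * (k.+1)%:R).
have D20 : 0 <= D2.
  have -> : D2 = ((k.+2)%:R * ((k.+1)%:R * s ^+ 2 - mu ^+ 2) + de * (k.+2)%:R * (2 * mu - de))
       / ((k.+1)%:R * k%:R * (k.+1)%:R).
    rewrite /D2 /T /a /S /A /B; field.
    by rewrite !gt_eqF.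
  apply: divr_ge0; last by rewrite !mulr_ge0 // ltW.
  apply: addr_ge0.
    apply: mulr_ge0; first exact: ler0n.
    rewrite subr_ge0 -hr.
    move: musr mu0; rewrite !expr2 => h1 h2; nra.
  apply: mulr_ge0; first by apply: mulr_ge0; [exact: ltW | exact: ler0n].
  move: de1 mu0; lra.
pose d := Num.sqrt D2.
have hd : d ^+ 2 = D2 by rewrite /d sqr_sqrtr.
have d0 : 0 <= d by exact: sqrtr_ge0.
have da : d < a.
  have e : a ^+ 2 - d ^+ 2 = (S ^+ 2 - T) / (k%:R * (k.+1)%:R).
    rewrite hd /D2 /a; field; by rewrite !gt_eqF.
  have : 0 < a ^+ 2 - d ^+ 2.
    rewrite e; apply: divr_gt0; last by rewrite mulr_gt0.
    have -> : S ^+ 2 - T = (B ^+ 2 - A) - 2 * B * de + 2 * de ^+ 2 by rewrite /S /T; ring.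
    have : 0 <= de ^+ 2 by exact: sqr_ge0.
    move: de2' BA; lra.
  move: a0 d0; rewrite !expr2 => h1 h2 h3; nra.
pose u := a + k%:R * d; pose w := a - d.
have u0 : 0 < u.
  have : 0 <= k%:R * d by apply: mulr_ge0 => //; exact: ltW.
  rewrite /u; move: a0; lra.
have w0 : 0 < w by rewrite /w subr_gt0.
have hsum : de + u + k%:R * w = B.
  rewrite /u /w /a /S; field; by rewrite gt_eqF.
have hsq : de ^+ 2 + u ^+ 2 + k%:R * w ^+ 2 = A.
  have -> : de ^+ 2 + u ^+ 2 + k%:R * w ^+ 2 =
      de ^+ 2 + (k.+1)%:R * a ^+ 2 + k%:R * (k.+1)%:R * d ^+ 2 by rewrite /u /w; ring.
  rewrite hd /D2 /T; field; by rewrite !gt_eqF.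
exists (three de u w); split.
  by move=> i; rewrite /three; case: ifP => _ //; case: ifP.
have [hm hs] : mean (three de u w) = mu /\ stddev (three de u w) = s.
  apply: moments2 => //.
    by rewrite (sum_three id).
  by rewrite (sum_three (fun z => z ^+ 2)).
split => //; split => //.
rewrite prod_three.
have uB : u <= B.
  rewrite -hsum; have : 0 <= k%:R * w by apply: mulr_ge0; exact: ltW.
  move: de0; lra.
have wB : w <= B.
  rewrite -hsum; have : 0 <= (k%:R - 1) * w by apply: mulr_ge0; [rewrite subr_ge0 | exact: ltW].
  move: de0 u0; nra.
have hw : w ^+ k <= B ^+ k.
  by apply: lerXn2r; rewrite ?nnegrE; [exact: ltW | exact: ltW | exact: wB].
have h1 : u * w ^+ k <= B * B ^+ k.
  apply: ler_pM; [exact: ltW | apply: exprn_ge0; exact: ltW | exact: uB | exact: hw].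
have h2 : de * (u * w ^+ k) <= de * B ^+ k.+1 by rewrite exprS ler_wpM2l // ltW.
have h3 : de * B ^+ k.+1 <= eps / 2.
  rewrite -ler_pdivlMr ?exprn_gt0 //.
  by apply: le_trans de3 _; rewrite invfM mulrA le_refl.
rewrite -mulrA; apply: le_lt_trans h2 _; apply: le_lt_trans h3 _.
by rewrite ltr_pdivrMr // ltr_pMr // ltr1n.
Qed.
Lemma sharp_lower (mu s : R) : 0 <= s ->
  mean (two (k:=k) (mu - s * rr) (mu + s / rr)) = mu /\
  stddev (two (k:=k) (mu - s * rr) (mu + s / rr)) = s /\
  prodx (two (k:=k) (mu - s * rr) (mu + s / rr)) = lower_bd N mu s.
Proof.
move=> s0; have r0 := rr_gt0; have rn0 : rr != 0 by rewrite gt_eqF.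
have [h1 h2] : mean (two (k:=k) (mu - s * rr) (mu + s / rr)) = mu /\
  stddev (two (k:=k) (mu - s * rr) (mu + s / rr)) = s.
  apply: two_stats => //.
    by rewrite rrN -rr_sqr; field.
  by rewrite rrN -rr_sqr; field.
by split => //; split => //; rewrite prod_two.
Qed.

Lemma sharp_upper (mu s : R) : 0 <= s ->
  mean (two (k:=k) (mu + s * rr) (mu - s / rr)) = mu /\
  stddev (two (k:=k) (mu + s * rr) (mu - s / rr)) = s /\
  prodx (two (k:=k) (mu + s * rr) (mu - s / rr)) = upper_bd N mu s.
Proof.
move=> s0; have r0 := rr_gt0; have rn0 : rr != 0 by rewrite gt_eqF.
have [h1 h2] : mean (two (k:=k) (mu + s * rr) (mu - s / rr)) = mu /\
  stddev (two (k:=k) (mu + s * rr) (mu - s / rr)) = s.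
  apply: two_stats => //.
    by rewrite rrN -rr_sqr; field.
  by rewrite rrN -rr_sqr; field.
by split => //; split => //; rewrite prod_two.
Qed.

Lemma lower_le0 (mu s : R) : 0 < mu -> 0 <= s -> mu - s * rr <= 0 -> lower_bd N mu s <= 0.
Proof.
move=> mu0 s0 h; rewrite /lower_bd /=.
apply: mulr_le0_ge0 => //; apply: exprn_ge0.
have : 0 <= s / rr by rewrite divr_ge0 // ltW // rr_gt0.
move: mu0; lra.
Qed.

Lemma pos_ratio x : (forall i, 0 < x i) -> stddev x < rr * mean x.
Proof.
move=> xpos.
have h := sumsq_lt x xpos.
rewrite sum_sq sum_mean -stddev_sqr in h.
have hv : stddev x ^+ 2 < (rr * mean x) ^+ 2.
  rewrite exprMn rr_sqr.
  have e : ((k.+2)%:R * mean x) ^+ 2 - (k.+2)%:R * (stddev x ^+ 2 + mean x ^+ 2) =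
    (k.+2)%:R * ((k.+1)%:R * mean x ^+ 2 - stddev x ^+ 2) by ring.
  have : 0 < (k.+2)%:R * ((k.+1)%:R * mean x ^+ 2 - stddev x ^+ 2) :> R.
    by rewrite -e subr_gt0.
  rewrite pmulr_rgt0 ?ltr0n // subr_gt0 //.
have s0 := stddev_ge0 x.
have m0 : 0 < rr * mean x.
  apply: mulr_gt0; first exact: rr_gt0.
  rewrite /mean; apply: divr_gt0; last by rewrite ltr0n.
  rewrite big_ord_recl; apply: ltr_pwDl; first exact: xpos.
  by apply: sumr_ge0 => j _; exact: ltW.
move: hv s0 m0; rewrite !expr2 => h1 h2 h3; nra.
Qed.
End Main.

Theorem theorem1 (R : realType) (n : nat) (hn : (2 <= n)%N) :
  let r := Num.sqrt ((n.-1)%:R : R) in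
  (* (a) bounds *)
  (forall x : 'I_n -> R,
      0 < mean x -> 0 <= stddev x / mean x -> stddev x / mean x < 1 / r ->
      (forall i, 0 < x i) /\
      lower_bd n (mean x) (stddev x) <= prodx x /\
      prodx x <= upper_bd n (mean x) (stddev x)) /\
  (* (a) sharpness *)
  (forall mu s : R, 0 < mu -> 0 <= s -> s / mu < 1 / r ->
      (exists x : 'I_n -> R,
          mean x = mu /\ stddev x = s /\ prodx x = lower_bd n mu s) /\
      (exists x : 'I_n -> R,
          mean x = mu /\ stddev x = s /\ prodx x = upper_bd n mu s)) /\
  (* (b) positive sequences: range of sigma/mu and the two bounds *)
  (forall x : 'I_n -> R, (forall i, 0 < x i) -> 0 < mean x ->
      0 <= stddev x / mean x /\ stddev x / mean x < r /\
      lower_bd n (mean x) (stddev x) <= prodx x /\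
      prodx x <= upper_bd n (mean x) (stddev x)) /\
  (* (b) the upper bound is attained by a positive sequence *)
  (forall mu s : R, 0 < mu -> 0 <= s -> s / mu < r ->
      exists x : 'I_n -> R, (forall i, 0 < x i) /\
          mean x = mu /\ stddev x = s /\ prodx x = upper_bd n mu s) /\
  (* (b) the lower bound expression is negative on 1/r < s/mu < r *)
  (forall mu s : R, 0 < mu -> 1 / r < s / mu -> s / mu < r ->
      lower_bd n mu s < 0) /\
  (* (b) max(0, lower bound) is the infimum of the product over positive
     sequences with mean mu and standard deviation s *)
  (forall mu s : R, 0 < mu -> 0 <= s -> s / mu < r ->
      (forall x : 'I_n -> R, (forall i, 0 < x i) ->
          mean x = mu -> stddev x = s ->
          Num.max 0 (lower_bd n mu s) <= prodx x) /\
      (forall eps : R, 0 < eps ->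
          exists x : 'I_n -> R, (forall i, 0 < x i) /\
              mean x = mu /\ stddev x = s /\
              prodx x < Num.max 0 (lower_bd n mu s) + eps)).
Proof.
case: n hn => [|[|k]] // _ r.
have -> : r = @rr R k by [].
have r0 := @rr_gt0 R k; have rn0 : @rr R k != 0 by rewrite gt_eqF.
have r1 := @rr_ge1 R k.
have ratio1 (mu s : R) : 0 < mu -> s / mu < 1 / (@rr R k) -> s * (@rr R k) < mu.
  move=> mu0; rewrite ltr_pdivrMr // => h.
  have := h; rewrite -(ltr_pM2r r0) => h'.
  have e : 1 / (@rr R k) * mu * (@rr R k) = mu by field.
  by rewrite e in h'.
have ratio2 (mu s : R) : 0 < mu -> s / mu < (@rr R k) -> s / (@rr R k) < mu.
  move=> mu0; rewrite ltr_pdivrMr // ltr_pdivrMr //; lra.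
have P3 : forall x : 'I_k.+2 -> R, (forall i, 0 < x i) -> 0 < mean x ->
      0 <= stddev x / mean x /\ stddev x / mean x < (@rr R k) /\
      lower_bd k.+2 (mean x) (stddev x) <= prodx x /\
      prodx x <= upper_bd k.+2 (mean x) (stddev x).
  move=> x xpos m0.
  have s0 := stddev_ge0 x.
  have hr : stddev x / mean x < (@rr R k) by rewrite ltr_pdivrMr //; exact: pos_ratio.
  split; first by rewrite divr_ge0 // ltW.
  split => //; split.
    have [h|h] := lerP (mean x - stddev x * (@rr R k)) 0.
      apply: le_trans (lower_le0 _ _ m0 s0 h : lower_bd k.+2 _ _ <= 0) _; apply: ltW; exact: prodx_gt0.
    exact: lower_main.
  apply: upper_main => //; rewrite subr_gt0; exact: ratio2.
split.
  move=> x m0 h0 h1.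
  have hp : 0 < mean x - stddev x * (@rr R k) by rewrite subr_gt0; exact: ratio1.
  have xpos := lower_pos x hp.
  split => //; split; first exact: lower_main.
  apply: upper_main => //; rewrite subr_gt0.
  have s0 := stddev_ge0 x.
  have : stddev x / (@rr R k) <= stddev x * (@rr R k).
    rewrite ler_pdivrMr // -mulrA; apply: ler_peMr => //.
    by rewrite -expr2 rr_sqr ler1n.
  have := ratio1 _ _ m0 h1; lra.
split.
  move=> mu s mu0 s0 h; split.
    by exists (two (mu - s * (@rr R k)) (mu + s / (@rr R k))); exact: sharp_lower.
  by exists (two (mu + s * (@rr R k)) (mu - s / (@rr R k))); exact: sharp_upper.
split; first exact: P3.
split.
  move=> mu s mu0 s0 h.
  exists (two (mu + s * (@rr R k)) (mu - s / (@rr R k))); split; last exact: sharp_upper.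
  apply: two_pos.
    have : 0 <= s * (@rr R k) by apply: mulr_ge0 => //; exact: ltW.
    move: mu0; lra.
    by rewrite subr_gt0; exact: ratio2.
split.
  move=> mu s mu0 h1 h2.
  have hs : mu < s * (@rr R k).
    move: h1; rewrite ltr_pdivlMr // => h1.
    have := h1; rewrite -(ltr_pM2r r0) => h'.
    have e : 1 / (@rr R k) * mu * (@rr R k) = mu by field.
    by rewrite e in h'.
  have s0 : 0 < s by have := mulr_gt0 mu0 r0; nra.
  rewrite /lower_bd /= mulrC pmulr_rlt0 ?subr_lt0 //.
  apply: exprn_gt0; have : 0 < s / (@rr R k) by rewrite divr_gt0.
  move: mu0; lra.
move=> mu s mu0 s0 h; split.
  move=> x xpos hm hs; rewrite ge_max; apply/andP; split.
    by apply: ltW; exact: prodx_gt0.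
  have m0 : 0 < mean x by rewrite hm.
  have [_ [_ [hl _]]] := P3 x xpos m0.
  by rewrite hm hs in hl.
move=> eps eps0.
have hlm : lower_bd k.+2 mu s <= Num.max 0 (lower_bd k.+2 mu s) by rewrite le_max lexx orbT.
have [hp|hp] := lerP (mu - s * (@rr R k)) 0.
  have k0 : (0 < k)%N.
    rewrite lt0n; apply/negP => /eqP k0; subst k.
    move: hp h; rewrite /rr sqrtr1 mulr1 ltr_pdivrMr // mul1r; lra.
  have h' : s < (@rr R k) * mu by rewrite -ltr_pdivrMr.
  have hp' : mu <= s * (@rr R k) by move: hp; lra.
  have [x [xp [xm [xs xe]]]] := inf_witness _ _ _ k0 mu0 s0 hp' h' eps0.
  exists x; split => //; split => //; split => //.
  by rewrite max_l ?add0r // (lower_le0 _ _ mu0 s0 hp).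
have [xm [xs xe]] := sharp_lower (k:=k) mu s s0.
exists (two (mu - s * (@rr R k)) (mu + s / (@rr R k))); split.
  apply: (two_pos hp).
  have : 0 <= s / (@rr R k) by apply: divr_ge0 => //; exact: ltW.
  move: mu0; lra.
split => //; split => //; rewrite xe.
move: hlm eps0; lra.
Qed.
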